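(* Let $\sigma$ be a confined position on the complete bipartite graph $K_{a,b}$ with sides $L$ ($|L|=a$) and $R$ ($|R|=b$). If $v,w\in L$ satisfy $\sigma(v)\le\sigma(w)$, then for all $t\ge 0$, $u_t(\sigma,v)\le u_t(\sigma,w)\le u_t(\sigma,v)+1$.
   Context: Parallel chip-firing game: on a graph $G$, a position $\sigma$ assigns a nonnegative integer $\sigma(v)$ to each vertex. Writing $\Phi_\sigma(v)$ for the number of neighbors $w$ of $v$ with $\sigma(w)\ge\deg(w)$, the step operator is $U\sigma(v)=\sigma(v)+\Phi_\sigma(v)$ if $\sigma(v)\le \deg(v)-1$ and $U\sigma(v)=\sigma(v)+\Phi_\sigma(v)-\deg(v)$ otherwise. A position is confined if every vertex satisfies $\Phi_\sigma(v)\le\sigma(v)\le\Phi_\sigma(v)+\deg(v)-1$. In $K_{a,b}$, every vertex of $L$ is adjacent exactly to all vertices of $R$ (degree $b$) and vice versa (degree $a$). $u_t(\sigma,v)=|\{s: 0\le s<t,\ U^s\sigma(v)\ge\deg(v)\}|$. *)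

(* Defs.v *)
From mathcomp Require Import all_boot.
Set Implicit Arguments. Unset Strict Implicit. Unset Printing Implicit Defensive.

(* Vertices of K_{a,b}: left side L = 'I_a (inl), right side R = 'I_b (inr). *)
Definition vtx (a b : nat) : finType := ('I_a + 'I_b)%type.

Definition adj a b (v w : vtx a b) : bool :=
  match v, w with
  | inl _, inr _ => true
  | inr _, inl _ => true
  | _, _ => false
  end.

Definition deg a b (v : vtx a b) : nat :=
  match v with inl _ => b | inr _ => a end.

Definition position a b := vtx a b -> nat.

Definition Phi a b (s : position a b) (v : vtx a b) : nat :=
  #|[pred w : vtx a b | adj v w && (deg w <= s w)]|.

(* Step operator U. (sigma(v) <= deg(v) - 1 is written sigma(v) < deg(v).) *)
Definition step a b (s : position a b) : position a b :=
  fun v => if s v < deg v then s v + Phi s v else s v + Phi s v - deg v.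

(* Confined: Phi(v) <= sigma(v) <= Phi(v) + deg(v) - 1 for all v
   (upper bound written without truncated subtraction). *)
Definition confined a b (s : position a b) : Prop :=
  forall v, Phi s v <= s v /\ s v < Phi s v + deg v.

Definition u a b (t : nat) (s : position a b) (v : vtx a b) : nat :=
  count (fun k => deg v <= iter k (@step a b) s v) (iota 0 t).

(* Main.v *)
Require Import Defs.
From mathcomp Require Import all_boot.
From Stdlib Require Import Lia PeanoNat.

Lemma PhiL a b (s : position a b) (v w : 'I_a) : Phi s (inl v) = Phi s (inl w).
Proof. by rewrite /Phi; apply: eq_card => z. Qed.

Lemma uS a b t (s : position a b) z :
  u t.+1 s z = u t s z + (deg z <= iter t (@step a b) s z).
Proof. by rewrite /u -addn1 iotaD count_cat /= addn0. Qed.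

Lemma ident a b t (s : position a b) (z : 'I_a) :
  iter t.+1 (@step a b) s (inl z) + b * u t.+1 s (inl z) =
  iter t (@step a b) s (inl z) + b * u t s (inl z) + Phi (iter t (@step a b) s) (inl z).
Proof.
rewrite uS /= /step /=.
set X := iter t _ s (inl z); set P := Phi _ _; set U := u t s (inl z).
case: (leqP b X) => H /=.
- rewrite addn1 mulnS. apply/eqP; rewrite -(eqn_add2r 0).
  move/leP: H => H. apply/eqP. rewrite -!plusE -!multE -!minusE. lia.
- rewrite addn0. rewrite addnAC. done.
Qed.

Theorem lemma3p1 (a b : nat) (s : position a b) (v w : 'I_a) :
  confined s ->
  s (inl v) <= s (inl w) ->
  forall t : nat,
    u t s (inl v) <= u t s (inl w) /\ u t s (inl w) <= u t s (inl v) + 1.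
Proof.
move=> Hc Hvw.
have [Hv1 _] := Hc (inl v). have [_ Hw2] := Hc (inl w).
rewrite (@PhiL a b s w v) /= in Hw2.
set D := s (inl w) - s (inl v).
have HD : D < b.
  rewrite /D. move/leP: Hv1 => Hv1. move/ltP: Hw2 => Hw2. move/leP: Hvw => Hvw'. apply/ltP.
  rewrite -!plusE in Hw2. rewrite -!minusE. set X1 := s (inl v) in Hv1 Hvw' Hw2 *. set X2 := s (inl w) in Hvw' Hw2 *. set X3 := Phi _ _ in Hv1 Hw2. lia.
suff H : forall t,
   [/\ u t s (inl v) <= u t s (inl w), u t s (inl w) <= u t s (inl v) + 1 &
    iter t (@step a b) s (inl w) + b * u t s (inl w) =
    iter t (@step a b) s (inl v) + b * u t s (inl v) + D].
  by move=> t; case: (H t).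
elim=> [|t [H1 H2 H3]].
  rewrite /u /= !muln0 !addn0 /D. split=> //. by rewrite subnKC.
have E3 : iter t.+1 (@step a b) s (inl w) + b * u t.+1 s (inl w) =
    iter t.+1 (@step a b) s (inl v) + b * u t.+1 s (inl v) + D.
  by rewrite !ident H3 (@PhiL a b _ w v) addnAC.
rewrite !uS /=.
set xv := iter t _ s (inl v) in H3 *; set xw := iter t _ s (inl w) in H3 *.
set uv := u t s (inl v) in H1 H2 H3 *; set uw := u t s (inl w) in H1 H2 H3 *.
move: E3; rewrite !uS /= -/xv -/xw -/uv -/uw => E3.
move/leP: H1 => H1; move/leP: H2 => H2; move/ltP: HD => HD'.
have H3' := H3. rewrite -!plusE -!multE in H3'.
move: E3; case: (leqP b xv) => Hbv; case: (leqP b xw) => Hbw => E3; move/leP: Hbv => Hbv; move/leP: Hbw => Hbw;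
  (split; last exact: E3); apply/leP; rewrite /nat_of_bool; rewrite -?plusE -?minusE -?multE in E3 H3 H2 H1 Hbv Hbw HD' |- *.
all: try lia.
all: clearbody xv xw uv uw D; clear E3 H3'.
all: assert (Hc2 : uw = uv \/ uw = (uv + 1)%coq_nat) by lia; destruct Hc2 as [->| ->]; rewrite ?Nat.mul_add_distr_l in H3; lia.
Qed.
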